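(* For any integers $n>m\ge1$, there is no algorithm for SSP (on instances with $n$ jobs and $m$ machines) that is $1$-consistent and $\frac{n-m+1}{\lceil n/m\rceil}$-robust, even in the case where all jobs have equal processing times. In particular, for $m=n/2$, there is no algorithm that is $1$-consistent and $o(n)$-robust.
   Context: Scheduling with Speed Predictions (SSP). An instance consists of $n$ jobs with processing times $p_1,\dots,p_n\ge 0$ and $m$ machines with true speeds $s_1,\dots,s_m>0$; processing job $j$ on machine $i$ takes time $p_j/s_i$. In the partitioning stage the algorithm receives $\mathbf p$ and predicted speeds $\hat{\mathbf s}\ge 0$ (not $\mathbf s$) and partitions the jobs into $m$ possibly empty bags. In the scheduling stage $\mathbf s$ is revealed and each bag is assigned whole to a machine; the makespan is the maximum over machines $i$ of (total processing time assigned to $i$)$/s_i$. $opt(\mathbf p,\mathbf s)$ is the minimum makespan of assigning individual jobs knowing $\mathbf s$; $alg(\mathbf p,\hat{\mathbf s},\mathbf s)$ is the algorithm's makespan. An algorithm is $c$-consistent if $alg(\mathbf p,\mathbf s,\mathbf s)\le c\cdot opt(\mathbf p,\mathbf s)$ for all $\mathbf p,\mathbf s$, and $\beta$-robust if $alg(\mathbf p,\hat{\mathbf s},\mathbf s)\le \beta\cdot opt(\mathbf p,\mathbf s)$ for all $\mathbf p,\hat{\mathbf s},\mathbf s$. *)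

(* Defs.v *)
From HB Require Import structures.
From mathcomp Require Import all_boot all_order all_algebra.
Set Implicit Arguments. Unset Strict Implicit. Unset Printing Implicit Defensive.
Import Order.TTheory GRing.Theory Num.Theory.
Local Open Scope ring_scope.

Section SSP.
Variables (R : realFieldType) (n m : nat).

Definition makespan (p : 'I_n -> R) (s : 'I_m -> R) (a : 'I_n -> 'I_m) : R :=
  \big[Order.max/0]_(i < m) ((\sum_(j < n | a j == i) p j) / s i).

(* opt(p,s): minimum makespan over all job-to-machine assignments
   (0 if there is no assignment at all, i.e. m = 0 and n > 0). *)
Definition opt (p : 'I_n -> R) (s : 'I_m -> R) : R :=
  oapp (fun a0 : {ffun 'I_n -> 'I_m} =>
          \big[Order.min/makespan p s a0]_(a : {ffun 'I_n -> 'I_m}) makespan p s a)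
       0 [pick a : {ffun 'I_n -> 'I_m}].

(* An SSP algorithm: the partitioning stage sees only p and the predicted
   speeds shat, and maps each job to one of m bags; the scheduling stage
   additionally sees the true speeds s and maps each bag (whole) to a machine. *)
Record algorithm := Algorithm {
  partition : ('I_n -> R) -> ('I_m -> R) -> 'I_n -> 'I_m;
  assign    : ('I_n -> R) -> ('I_m -> R) -> ('I_m -> R) -> 'I_m -> 'I_m
}.

Definition alg (A : algorithm) (p : 'I_n -> R) (shat s : 'I_m -> R) : R :=
  makespan p s (fun j => assign A p shat s (partition A p shat j)).

(* Admissible processing-time vectors are restricted to a class P
   (P = all nonnegative vectors gives the general definitions). *)
Definition consistent_on (P : ('I_n -> R) -> Prop) (c : R) (A : algorithm) :=
  forall (p : 'I_n -> R) (s : 'I_m -> R),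
    P p -> (forall i, 0 < s i) -> alg A p s s <= c * opt p s.

Definition robust_on (P : ('I_n -> R) -> Prop) (beta : R) (A : algorithm) :=
  forall (p : 'I_n -> R) (shat s : 'I_m -> R),
    P p -> (forall i, 0 <= shat i) -> (forall i, 0 < s i) ->
    alg A p shat s <= beta * opt p s.

Definition equal_times (p : 'I_n -> R) : Prop :=
  exists c : R, 0 <= c /\ forall j, p j = c.

End SSP.

Definition ceil_div (a b : nat) : nat := (a %/ b + ~~ (b %| a))%N.

(* Main.v *)
Require Import Defs.
From HB Require Import structures.
From mathcomp Require Import all_boot all_order all_algebra.
From mathcomp Require Import zify ring lra.
Import Order.TTheory GRing.Theory Num.Theory.
Local Open Scope ring_scope.

Section Aux.
Variables (R : realFieldType) (n M : nat).

Lemma mk_ge (p : 'I_n -> R) (s : 'I_M -> R) a i :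
  (\sum_(j < n | a j == i) p j) / s i <= makespan p s a.
Proof. by rewrite /makespan (bigD1 i) //= le_max lexx. Qed.

Lemma mk_le (p : 'I_n -> R) (s : 'I_M -> R) a c : 0 <= c ->
  (forall i, (\sum_(j < n | a j == i) p j) / s i <= c) -> makespan p s a <= c.
Proof.
move=> c0 H; rewrite /makespan; apply: (big_ind (fun x => x <= c)) => //.
by move=> x y hx hy; rewrite ge_max hx hy.
Qed.

Lemma mk_ge0 (p : 'I_n -> R) (s : 'I_M -> R) a :
  (forall i, 0 <= (\sum_(j < n | a j == i) p j) / s i) -> 0 <= makespan p s a.
Proof.
move=> H; rewrite /makespan; apply: (big_ind (fun x => 0 <= x)) => //.
by move=> x y hx hy; rewrite le_max hx.
Qed.

Lemma opt_le (p : 'I_n -> R) (s : 'I_M -> R) (a : 'I_n -> 'I_M) :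
  opt p s <= makespan p s a.
Proof.
have -> : makespan p s a = makespan p s [ffun j => a j].
  by apply: eq_bigr => i _; congr (_ / _); apply: eq_bigl => j; rewrite ffunE.
rewrite /opt; case: pickP => [a0 _ | H]; last by have := H [ffun j => a j].
by rewrite /= (bigD1 [ffun j => a j]) //= ge_min lexx.
Qed.

Lemma opt_ge0 (p : 'I_n -> R) (s : 'I_M -> R) :
  (forall a, 0 <= makespan p s a) -> 0 <= opt p s.
Proof.
move=> H; rewrite /opt; case: pickP => [a0 _ | //] /=.
apply: (big_ind (fun x => 0 <= x)) => //.
by move=> x y hx hy; rewrite le_min hx.
Qed.

Lemma load1 (a : 'I_n -> 'I_M) i :
  \sum_(j < n | a j == i) (1 : R) = (#|[set j | a j == i]|)%:R.
Proof.
rewrite -sum1_card natr_sum; apply: eq_bigl => j; by rewrite inE.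
Qed.

Lemma comb (g : 'I_n -> 'I_M) (f : 'I_M -> 'I_M) (i0 : 'I_M) : (M <= n)%N ->
  (#|[set j | f (g j) == i0]| <= n - M + 1)%N ->
  (forall i, i != i0 -> #|[set j | f (g j) == i]| <= 1)%N ->
  exists b, (n - M + 1 <= #|[set j | g j == b]|)%N.
Proof.
move=> MN H0 H1.
set J0 := [set j | f (g j) == i0].
have H0' : (#|J0| <= n - M + 1)%N := H0.
have Finj : {in ~: J0 &, injective (fun j => f (g j))}.
  move=> j1 j2; rewrite !inE => h1 h2 e.
  have /card_le1_eqP := H1 _ h1; apply; rewrite inE //; by rewrite -e.
have ginj : {in ~: J0 &, injective g}.
  by move=> j1 j2 h1 h2 e; apply: Finj => //; rewrite /= e.
have cN : (#|~: J0| <= M - 1)%N.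
  rewrite -(card_in_imset Finj).
  have -> : (M - 1 = #|~: [set i0]|)%N.
    by have := cardsC [set i0]; rewrite cards1 card_ord; lia.
  apply: subset_leq_card; apply/subsetP => i /imsetP [j]; rewrite !inE => h ->.
  done.
have tot := cardsC J0; rewrite card_ord in tot.
set B0 := [set b | f b == i0].
have cB : (#|B0| <= 1)%N.
  have : (#|g @: ~: J0| <= #|~: B0|)%N.
    apply: subset_leq_card; apply/subsetP => i /imsetP [j]; rewrite !inE => h ->.
    done.
  rewrite (card_in_imset ginj) => h.
  have := cardsC B0; rewrite card_ord => tB. have M0 := ltn_ord i0. clearbody J0 B0. lia.
have : (0 < #|J0|)%N.
  have M0 := ltn_ord i0. move: cN tot H0' MN M0. clearbody J0. lia.
case/card_gt0P => j0 hj0; exists (g j0).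
have : (#|J0| <= #|[set j | g j == g j0]|)%N.
  apply: subset_leq_card; apply/subsetP => j hj; rewrite inE.
  have /card_le1_eqP := cB; move=> e; apply/eqP; apply: e; rewrite inE.
    by move: hj0; rewrite inE.
  by move: hj; rewrite inE.
have M0 := ltn_ord i0. move: cN tot MN M0. clearbody J0. lia.
Qed.
End Aux.
Arguments mk_ge {R n M}.
Arguments mk_le {R n M}.
Arguments mk_ge0 {R n M}.
Arguments opt_le {R n M}.
Arguments opt_ge0 {R n M}.
Arguments load1 {R n M}.
Arguments comb {n M}.

Theorem proposition1 (R : realFieldType) (n m : nat) :
  (1 <= m)%N -> (m < n)%N ->
  forall (A : algorithm R n m) (beta : R),
    consistent_on (@equal_times R n) 1 A ->
    robust_on (@equal_times R n) beta A ->
    (n - m + 1)%:R / (ceil_div n m)%:R <= beta.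
Proof.
case: m => [//|m'] _ mn A beta Hc Hr.
set k := (n - m'.+1 + 1)%N.
pose p1 : 'I_n -> R := fun _ => 1.
pose s0 : 'I_m'.+1 -> R := fun i => if i == ord_max then k%:R else 1.
have k0 : (0 < k)%N by rewrite /k addn1.
have ep1 : equal_times p1 by exists 1; split.
have s0pos : forall i, 0 < s0 i.
  by move=> i; rewrite /s0; case: ifP => _; rewrite ?ltr0n ?ltr01.
pose g := Defs.partition A p1 s0.
pose f := assign A p1 s0 s0.
have hc : alg A p1 s0 s0 <= 1.
  apply: le_trans (Hc _ _ ep1 s0pos) _; rewrite mul1r.
  pose astar (j : 'I_n) : 'I_m'.+1 := inord (minn j m').
  apply: le_trans (opt_le _ _ astar) _.
  apply: mk_le => // i; rewrite load1 /s0.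
  case: ifP => /eqP hi.
  - rewrite ler_pdivrMr ?ltr0n // mul1r ler_nat.
    have -> : k = #|'I_(n - m'.+1).+1| by rewrite card_ord /k addn1.
    apply: (@leq_card_in _ _ (fun j : 'I_n => inord (j - m') : 'I_(n - m'.+1).+1)).
    move=> j1 j2; rewrite !inE hi => /eqP h1 /eqP h2 e.
    have := congr1 val h1; have := congr1 val h2; have := congr1 val e.
    have l1 := ltn_ord j1; have l2 := ltn_ord j2.
    rewrite /= !inordK; try lia.
    move=> *; apply: ord_inj; lia.
  - rewrite divr1 lern1; apply/card_le1_eqP => j1 j2; rewrite !inE => /eqP h1 /eqP h2.
    have := congr1 val h1; have := congr1 val h2.
    have hi' : (i < m')%N.
      rewrite ltn_neqAle -ltnS ltn_ord andbT; apply/eqP => e; apply: hi; apply: ord_inj; by rewrite e.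
    have l1 := ltn_ord j1; have l2 := ltn_ord j2.
    rewrite /= !inordK; try lia.
    move=> *; apply: ord_inj; lia.
have Hi0 : (#|[set j | f (g j) == ord_max]| <= k)%N.
  have := le_trans (mk_ge _ _ (fun j => f (g j)) ord_max) hc.
  by rewrite load1 /s0 eqxx ler_pdivrMr ?ltr0n // mul1r ler_nat.
have Hi1 : forall i, i != ord_max -> (#|[set j | f (g j) == i]| <= 1)%N.
  move=> i /negbTE hi.
  have := le_trans (mk_ge _ _ (fun j => f (g j)) i) hc.
  by rewrite load1 /s0 hi divr1 lern1.
have [b hb] := comb g f ord_max (ltnW mn) Hi0 Hi1.
pose ones : 'I_m'.+1 -> R := fun _ => 1.
have s0ge0 : forall i, 0 <= s0 i by move=> i; apply: ltW.
have hr := Hr p1 s0 ones ep1 s0ge0 (fun _ => ltr01).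
pose f' := assign A p1 s0 ones.
have ha : k%:R <= alg A p1 s0 ones.
  apply: le_trans (mk_ge _ _ (fun j => f' (g j)) (f' b)).
  rewrite load1 divr1 ler_nat; apply: leq_trans hb _.
  apply: subset_leq_card; apply/subsetP => j; rewrite !inE => /eqP ->; done.
set c := ceil_div n m'.+1.
have cm : (n <= c * m'.+1)%N.
  rewrite /c /ceil_div; case: (boolP (m'.+1 %| n)%N) => h.
    by rewrite /= addn0 divnK.
  by rewrite /= addn1; apply: ltnW; apply: ltn_ceil.
have c0 : (0 < c)%N by move: cm mn; clearbody c; lia.
have ho : opt p1 ones <= c%:R.
  pose arob (j : 'I_n) : 'I_m'.+1 := inord (j %/ c).
  apply: le_trans (opt_le _ _ arob) _.
  apply: mk_le => // i; rewrite load1 divr1 ler_nat.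
  have -> : c = #|'I_c| by rewrite card_ord.
  apply: (@leq_card_in _ _ (fun j : 'I_n => Ordinal (ltn_pmod j c0))).
  move=> j1 j2; rewrite !inE => /eqP h1 /eqP h2 e.
  have d1 : (j1 %/ c < m'.+1)%N by rewrite ltn_divLR // mulnC (leq_trans _ cm).
  have d2 : (j2 %/ c < m'.+1)%N by rewrite ltn_divLR // mulnC (leq_trans _ cm).
  have := congr1 val h1; have := congr1 val h2; have := congr1 val e.
  rewrite /= !inordK // => e1 e2 e3.
  apply: val_inj; rewrite /= (divn_eq j1 c) (divn_eq j2 c) e1 e2 e3 //.
have ho0 : 0 <= opt p1 ones.
  apply: opt_ge0 => a; apply: mk_ge0 => i; by rewrite load1 divr1 ler0n.
have kk : (n - m'.+1 + 1)%:R / c%:R <= beta.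
  rewrite ler_pdivrMr ?ltr0n //.
  have kpos : 0 < (k%:R : R) by rewrite ltr0n.
  have := le_trans ha hr; rewrite -/k => h.
  have bpos : 0 < beta.
    rewrite ltNge; apply/negP => hb0.
    have : beta * opt p1 ones <= 0 by rewrite mulr_le0_ge0.
    move: h kpos; set o := beta * _; lra.
  apply: le_trans h _; rewrite ler_pM2l //.
exact: kk.
Qed.
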